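(* Let $S$ be an $L$-theory extending $I\Sigma_1$ such that for some $K\in\mathbb{N}$, $S$ proves: for all $a,b,c$, if $a,b,c$ are pairwise coprime and $a+b=c$, then $c < K\,\mathrm{rad}(abc)^{1+1/3}$; and $S$ proves Catalan's conjecture for the definable exponential $x^y$, i.e., the only $x,y,a,b>1$ with $x^a - y^b = 1$ are $x=3$, $a=2$, $y=2$, $b=3$. Then the theory $S + \mathrm{Exp}'$ proves Catalan's conjecture for $e$: whenever $x,y \in B$ and $a,b \in A$ with $x,y,a,b>1$ and $e(x,a) - e(y,b) = 1$, then $x=3$, $a=2$, $y=2$, $b=3$.
   Context: $L = \langle 0,1,+,\cdot,\le\rangle$ and $L^e = \langle 0,1,+,\cdot,e,\le\rangle$ with $e$ a binary (possibly partial) function symbol. $I\Sigma_1$ is Robinson arithmetic plus induction for $\Sigma_1$-formulas; in it the usual exponential $x^y$ is $\Delta_1$-definable and every element has a unique prime factorization. $\mathrm{rad}(a)$ is the product of all primes dividing $a$, each taken once. Presburger arithmetic $\mathrm{Pr}$: $0 \ne z+1$; $x\neq 0 \to \exists z\,(x = z+1)$; $x+z=y+z\to x=y$; $x+0=x$; associativity and commutativity of $+$; $x\le y \leftrightarrow \exists z\,(x+z=y)$; and for each standard $0<n\in\mathbb{N}$, $\exists y\,(ny \le x < n(y+1))$. $\mathrm{Exp}'$ consists of the axioms for an $L^e$-structure $\langle \mathcal{B},e\rangle$: (e0) there is an $L$-substructure $\mathcal{A}$ of $\mathcal{B}$ (universe $A$) satisfying the axioms of $\mathrm{Pr}$ such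 that $e: B\times A\to B$; and for all $x\in B$, $y,z\in A$: (e1) $(x=1\vee y=0)\leftrightarrow e(x,y)=1$; (e2) $x\neq0\to e(x,y)\ne 0$; (e3) $e(x,1)=x$; (e4) $e(x,y+z)=e(x,y)\cdot e(x,z)$. *)

(* Defs.v *)
Record LStruct := {
  car :> Type;
  zero : car;
  one : car;
  add : car -> car -> car;
  mul : car -> car -> car;
  le : car -> car -> Prop
}.

Arguments zero {_}.
Arguments one {_}.
Arguments add {_} _ _.
Arguments mul {_} _ _.
Arguments le {_} _ _.

Definition lt {M : LStruct} (x y : M) : Prop := le x y /\ x <> y.

Fixpoint natmul {M : LStruct} (n : nat) (y : M) : M :=
  match n with
  | O => zero
  | S k => add (natmul k y) y
  end.

Definition numeral {M : LStruct} (n : nat) : M := natmul n one.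

Inductive term : Type :=
  | tvar : nat -> term
  | tzero : term
  | tone : term
  | tadd : term -> term -> term
  | tmul : term -> term -> term.

Inductive form : Type :=
  | feq : term -> term -> form
  | fle : term -> term -> form
  | fnot : form -> form
  | fand : form -> form -> form
  | f_or : form -> form -> form
  | fimp : form -> form -> form
  | fall : form -> form
  | fex : form -> form
  | fball : term -> form -> form   (* forall x <= t, phi  (t read outside the binder) *)
  | fbex : term -> form -> form.

Fixpoint isDelta0 (f : form) : Prop :=
  match f with
  | feq _ _ | fle _ _ => True
  | fnot g => isDelta0 g
  | fand g h | f_or g h | fimp g h => isDelta0 g /\ isDelta0 h
  | fall _ | fex _ => False
  | fball _ g | fbex _ g => isDelta0 g
  end.

Fixpoint isSigma1 (f : form) : Prop :=
  isDelta0 f \/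
  match f with
  | fex g => isSigma1 g
  | _ => False
  end.

Definition scons {M : LStruct} (x : M) (env : nat -> M) : nat -> M :=
  fun n => match n with O => x | S k => env k end.

Fixpoint teval {M : LStruct} (env : nat -> M) (t : term) : M :=
  match t with
  | tvar n => env n
  | tzero => zero
  | tone => one
  | tadd a b => add (teval env a) (teval env b)
  | tmul a b => mul (teval env a) (teval env b)
  end.

Fixpoint sat {M : LStruct} (env : nat -> M) (f : form) : Prop :=
  match f with
  | feq a b => teval env a = teval env b
  | fle a b => le (teval env a) (teval env b)
  | fnot g => ~ sat env g
  | fand g h => sat env g /\ sat env h
  | f_or g h => sat env g \/ sat env h
  | fimp g h => sat env g -> sat env h
  | fall g => forall x : M, sat (scons x env) g
  | fex g => exists x : M, sat (scons x env) g
  | fball t g => forall x : M, le x (teval env t) -> sat (scons x env) g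
  | fbex t g => exists x : M, le x (teval env t) /\ sat (scons x env) g
  end.

Definition RobinsonQ (M : LStruct) : Prop :=
  (forall x : M, zero <> add x one) /\
  (forall x y : M, add x one = add y one -> x = y) /\
  (forall x : M, x <> zero -> exists y : M, x = add y one) /\
  (forall x : M, add x zero = x) /\
  (forall x y : M, add x (add y one) = add (add x y) one) /\
  (forall x : M, mul x zero = zero) /\
  (forall x y : M, mul x (add y one) = add (mul x y) x) /\
  (forall x y : M, le x y <-> exists z : M, add x z = y).

(* induction on variable 0, all other variables are parameters *)
Definition Sigma1Induction (M : LStruct) : Prop :=
  forall phi : form, isSigma1 phi ->
  forall env : nat -> M,
    sat (scons zero env) phi ->
    (forall x : M, sat (scons x env) phi -> sat (scons (add x one) env) phi) ->
    forall x : M, sat (scons x env) phi.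

Definition ISigma1 (M : LStruct) : Prop := RobinsonQ M /\ Sigma1Induction M.

Definition divides {M : LStruct} (d n : M) : Prop := exists k : M, mul d k = n.

Definition coprime {M : LStruct} (a b : M) : Prop :=
  forall d : M, divides d a -> divides d b -> d = one.

Definition prime {M : LStruct} (p : M) : Prop :=
  lt one p /\ forall d : M, divides d p -> d = one \/ d = p.

(* rad n = r : r is the least positive divisor of n that is divisible by
   every prime divisor of n (i.e. the product of the distinct primes of n) *)
Definition isRad {M : LStruct} (n r : M) : Prop :=
  lt zero r /\ divides r n /\ (forall p : M, prime p -> divides p n -> divides p r) /\
  (forall s : M, lt zero s -> divides s n ->
     (forall p : M, prime p -> divides p n -> divides p s) -> le r s).

(* ABC with exponent 1+1/3 and constant K:  c < K rad(abc)^(4/3),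
   written without real exponents as  c^3 < K^3 * rad(abc)^4 *)
Definition ABC_4_3 (M : LStruct) (K : nat) : Prop :=
  forall a b c : M, lt zero a -> lt zero b -> lt zero c ->
    coprime a b -> coprime a c -> coprime b c -> add a b = c ->
    forall r : M, isRad (mul (mul a b) c) r ->
      lt (mul (mul c c) c) (natmul (K * K * K) (mul (mul r r) (mul r r))).

Definition CatalanFor {M : LStruct} (D : M -> Prop) (E : M -> M -> M) : Prop :=
  forall x y a b : M, D a -> D b ->
    lt one x -> lt one y -> lt one a -> lt one b ->
    E x a = add (E y b) one ->
    x = numeral 3 /\ a = numeral 2 /\ y = numeral 2 /\ b = numeral 3.

(* In a model of I Sigma_1 there is exactly one
   such function. Variables: 2 = x, 1 = y, 0 = z (graph: x^y = z). *)
Definition IsDefinableExp (M : LStruct) (E : M -> M -> M) : Prop :=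
  (exists phi : form, isSigma1 phi /\
     forall (env : nat -> M) (x y z : M),
       sat (scons z (scons y (scons x env))) phi <-> E x y = z) /\
  (forall x : M, E x zero = one) /\
  (forall x y : M, E x (add y one) = mul (E x y) x).

Definition CatalanExp (M : LStruct) : Prop :=
  forall E : M -> M -> M, IsDefinableExp M E -> CatalanFor (fun _ => True) E.

(* (e0): A is an L-substructure of B satisfying Presburger arithmetic
   (relativized to A, with the order of B), and e : B x A -> B *)
Definition LSubstructure {B : LStruct} (A : B -> Prop) : Prop :=
  A zero /\ A one /\
  (forall x y : B, A x -> A y -> A (add x y)) /\
  (forall x y : B, A x -> A y -> A (mul x y)).

Definition Presburger {B : LStruct} (A : B -> Prop) : Prop :=
  (forall z : B, A z -> zero <> add z one) /\
  (forall x : B, A x -> x <> zero -> exists z : B, A z /\ x = add z one) /\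
  (forall x y z : B, A x -> A y -> A z -> add x z = add y z -> x = y) /\
  (forall x : B, A x -> add x zero = x) /\
  (forall x y z : B, A x -> A y -> A z -> add x (add y z) = add (add x y) z) /\
  (forall x y : B, A x -> A y -> add x y = add y x) /\
  (forall x y : B, A x -> A y -> (le x y <-> exists z : B, A z /\ add x z = y)) /\
  (forall n : nat, 0 < n -> forall x : B, A x ->
     exists y : B, A y /\ le (natmul n y) x /\ lt x (natmul n (add y one))).

Definition ExpPrime (B : LStruct) (A : B -> Prop) (e : B -> B -> B) : Prop :=
  LSubstructure A /\ Presburger A /\
  (forall (x y : B), A y -> ((x = one \/ y = zero) <-> e x y = one)) /\
  (forall (x y : B), A y -> x <> zero -> e x y <> zero) /\
  (forall x : B, e x one = x) /\
  (forall (x y z : B), A y -> A z -> e x (add y z) = mul (e x y) (e x z)).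

(* Main.v *)
Require Import Defs.
From Stdlib Require Import Classical ClassicalEpsilon Lia Ring Arith PeanoNat.

Fixpoint trename (r : nat -> nat) (t : term) : term :=
  match t with
  | tvar n => tvar (r n)
  | tzero => tzero | tone => tone
  | tadd a b => tadd (trename r a) (trename r b)
  | tmul a b => tmul (trename r a) (trename r b)
  end.

Definition uprn (r : nat -> nat) : nat -> nat :=
  fun n => match n with O => O | S k => S (r k) end.

Fixpoint frename (r : nat -> nat) (f : form) : form :=
  match f with
  | feq a b => feq (trename r a) (trename r b)
  | fle a b => fle (trename r a) (trename r b)
  | fnot g => fnot (frename r g)
  | fand g h => fand (frename r g) (frename r h)
  | f_or g h => f_or (frename r g) (frename r h)
  | fimp g h => fimp (frename r g) (frename r h)
  | fall g => fall (frename (uprn r) g)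
  | fex g => fex (frename (uprn r) g)
  | fball t g => fball (trename r t) (frename (uprn r) g)
  | fbex t g => fbex (trename r t) (frename (uprn r) g)
  end.

Definition tlift (t : term) : term := trename S t.

Section Syn.
Context {M : LStruct}.

Lemma teval_ext (e1 e2 : nat -> M) t :
  (forall n, e1 n = e2 n) -> teval e1 t = teval e2 t.
Proof. intro H; induction t; simpl; congruence. Qed.

Lemma sat_ext f : forall (e1 e2 : nat -> M),
  (forall n, e1 n = e2 n) -> (sat e1 f <-> sat e2 f).
Proof.
  induction f; intros e1 e2 H; simpl;
  try (rewrite (teval_ext e1 e2 t H));
  try (rewrite (teval_ext e1 e2 t0 H)); try tauto.
  - rewrite (IHf e1 e2 H); tauto.
  - rewrite (IHf1 e1 e2 H), (IHf2 e1 e2 H); tauto.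
  - rewrite (IHf1 e1 e2 H), (IHf2 e1 e2 H); tauto.
  - rewrite (IHf1 e1 e2 H), (IHf2 e1 e2 H); tauto.
  - split; intros G x; apply (IHf (scons x e1) (scons x e2)); auto;
      intros [|n]; simpl; auto.
  - split; intros [x G]; exists x; apply (IHf (scons x e1) (scons x e2)); auto;
      intros [|n]; simpl; auto.
  - split; intros G x Hx; apply (IHf (scons x e1) (scons x e2)); auto;
      intros [|n]; simpl; auto.
  - split; intros [x [Hx G]]; exists x; split; auto;
      apply (IHf (scons x e1) (scons x e2)); auto; intros [|n]; simpl; auto.
Qed.

Lemma teval_rename r (env : nat -> M) t :
  teval env (trename r t) = teval (fun n => env (r n)) t.
Proof. induction t; simpl; congruence. Qed.

Lemma sat_rename f : forall r (env : nat -> M),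
  sat env (frename r f) <-> sat (fun n => env (r n)) f.
Proof.
  induction f; intros r env; simpl; rewrite ?teval_rename; try tauto.
  - rewrite IHf; tauto.
  - rewrite IHf1, IHf2; tauto.
  - rewrite IHf1, IHf2; tauto.
  - rewrite IHf1, IHf2; tauto.
  - split; intros G x; specialize (G x); rewrite IHf in *;
      (eapply sat_ext; [|exact G]); intros [|n]; reflexivity.
  - split; intros [x G]; exists x; rewrite IHf in *;
      (eapply sat_ext; [|exact G]); intros [|n]; reflexivity.
  - split; intros G x Hx; specialize (G x Hx); rewrite IHf in *;
      (eapply sat_ext; [|exact G]); intros [|n]; reflexivity.
  - split; intros [x [Hx G]]; exists x; split; auto; rewrite IHf in *;
      (eapply sat_ext; [|exact G]); intros [|n]; reflexivity.
Qed.

Lemma teval_lift x (env : nat -> M) t : teval (scons x env) (tlift t) = teval env t.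
Proof. unfold tlift; rewrite teval_rename; apply teval_ext; reflexivity. Qed.

End Syn.

Lemma delta0_rename f : forall r, isDelta0 f -> isDelta0 (frename r f).
Proof. induction f; simpl; intuition. Qed.

Lemma sigma1_rename f : forall r, isSigma1 f -> isSigma1 (frename r f).
Proof.
  induction f; intros r H; simpl in *;
  try (destruct H as [H|H]; [left; apply delta0_rename; exact H|]); try tauto.
  1-3: left; destruct H as [[H1 H2]|[]]; split; apply delta0_rename; auto.
  right. destruct H as [[]|H]. apply IHf; auto.
Qed.

Definition fltf (t u : term) : form := fand (fle t u) (fnot (feq t u)).
Definition fdivf (t u : term) : form := fbex u (feq (tmul (tlift t) (tvar 0)) (tlift u)).
Definition fprimef (t : term) : form :=
  fand (fltf tone t) (fball t (fimp (fdivf (tvar 0) (tlift t))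
     (f_or (feq (tvar 0) tone) (feq (tvar 0) (tlift t))))).

Lemma d0_lt t u : isDelta0 (fltf t u). Proof. simpl; tauto. Qed.
Lemma d0_div t u : isDelta0 (fdivf t u). Proof. simpl; tauto. Qed.
Lemma d0_prime t : isDelta0 (fprimef t). Proof. simpl; tauto. Qed.

Definition tmodt (tD ti : term) : term := tadd tone (tmul (tadd ti tone) tD).
Definition fbetaf (tc tD ti tv : term) : form :=
  fbex tc (fand (feq (tlift tc) (tadd (tmul (tvar 0) (tlift (tmodt tD ti))) (tlift tv)))
              (fltf (tlift tv) (tlift (tmodt tD ti)))).
Lemma d0_beta a b c d : isDelta0 (fbetaf a b c d). Proof. simpl; tauto. Qed.

Section Arith.
Variable M : LStruct.
Hypothesis HI : ISigma1 M.

Declare Scope M_scope.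
Local Notation "x + y" := (@add M x y) : M_scope.
Local Notation "x * y" := (@mul M x y) : M_scope.
Local Notation "0" := (@zero M) : M_scope.
Local Notation "1" := (@one M) : M_scope.
Local Notation "x <= y" := (@le M x y) : M_scope.
Local Notation "x < y" := (@lt M x y) : M_scope.
Local Open Scope M_scope.

Lemma Q1 : forall x : M, 0 <> x + 1. Proof. apply HI. Qed.
Lemma Q2 : forall x y : M, x + 1 = y + 1 -> x = y. Proof. apply HI. Qed.
Lemma Q3 : forall x : M, x <> 0 -> exists y, x = y + 1. Proof. apply HI. Qed.
Lemma Q4 : forall x : M, x + 0 = x. Proof. apply HI. Qed.
Lemma Q5 : forall x y : M, x + (y + 1) = (x + y) + 1. Proof. apply HI. Qed.
Lemma Q6 : forall x : M, x * 0 = 0. Proof. apply HI. Qed.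
Lemma Q7 : forall x y : M, x * (y + 1) = x * y + x. Proof. apply HI. Qed.
Lemma Q8 : forall x y : M, x <= y <-> exists z, x + z = y. Proof. apply HI. Qed.

Lemma IND (phi : form) (env : nat -> M) (P : M -> Prop) :
  isSigma1 phi -> (forall x, sat (scons x env) phi <-> P x) ->
  P 0 -> (forall x, P x -> P (x + 1)) -> forall x, P x.
Proof.
  intros Hs HP H0 HS x. apply HP. apply (proj2 HI phi Hs env).
  - apply HP; auto.
  - intros y Hy. apply HP. apply HS. apply HP. exact Hy.
Qed.

Definition env0 : nat -> M := fun _ => 0.

Ltac indf phi env := match goal with |- forall z, @?P z =>
  apply (IND phi env P); [simpl; tauto | intro; simpl; reflexivity | |] end.

Lemma add_0_l : forall x : M, 0 + x = x.
Proof.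
  indf (feq (tadd tzero (tvar 0)) (tvar 0)) env0.
  - apply Q4.
  - intros x H. rewrite Q5, H. reflexivity.
Qed.

Lemma add_S_l : forall x y : M, (x + 1) + y = (x + y) + 1.
Proof.
  intro x.
  indf (feq (tadd (tadd (tvar 1) tone) (tvar 0)) (tadd (tadd (tvar 1) (tvar 0)) tone)) (scons x env0).
  - rewrite !Q4. reflexivity.
  - intros y H. rewrite !Q5, H. reflexivity.
Qed.

Lemma add_comm : forall x y : M, x + y = y + x.
Proof.
  intro x.
  indf (feq (tadd (tvar 1) (tvar 0)) (tadd (tvar 0) (tvar 1))) (scons x env0).
  - rewrite Q4, add_0_l. reflexivity.
  - intros y H. rewrite Q5, add_S_l, H. reflexivity.
Qed.

Lemma add_assoc : forall x y z : M, x + (y + z) = (x + y) + z.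
Proof.
  intros x y.
  indf (feq (tadd (tvar 2) (tadd (tvar 1) (tvar 0))) (tadd (tadd (tvar 2) (tvar 1)) (tvar 0)))
    (scons y (scons x env0)).
  - rewrite !Q4. reflexivity.
  - intros z H. rewrite !Q5, H. reflexivity.
Qed.

Lemma mul_0_l : forall x : M, 0 * x = 0.
Proof.
  indf (feq (tmul tzero (tvar 0)) tzero) env0.
  - apply Q6.
  - intros x H. rewrite Q7, H, Q4. reflexivity.
Qed.

Lemma mul_S_l : forall x y : M, (x + 1) * y = x * y + y.
Proof.
  intro x.
  indf (feq (tmul (tadd (tvar 1) tone) (tvar 0)) (tadd (tmul (tvar 1) (tvar 0)) (tvar 0))) (scons x env0).
  - rewrite !Q6, Q4. reflexivity.
  - intros y H. rewrite !Q7, H.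
    rewrite <- !add_assoc. f_equal. rewrite !Q5, (add_comm y x). reflexivity.
Qed.

Lemma mul_comm : forall x y : M, x * y = y * x.
Proof.
  intro x.
  indf (feq (tmul (tvar 1) (tvar 0)) (tmul (tvar 0) (tvar 1))) (scons x env0).
  - rewrite Q6, mul_0_l. reflexivity.
  - intros y H. rewrite Q7, mul_S_l, H. reflexivity.
Qed.

Lemma mul_add_r : forall x y z : M, x * (y + z) = x * y + x * z.
Proof.
  intros x y.
  indf (feq (tmul (tvar 2) (tadd (tvar 1) (tvar 0))) (tadd (tmul (tvar 2) (tvar 1)) (tmul (tvar 2) (tvar 0))))
    (scons y (scons x env0)).
  - rewrite Q4, Q6, Q4. reflexivity.
  - intros z H. rewrite Q5, !Q7, H, add_assoc. reflexivity.
Qed.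

Lemma mul_assoc : forall x y z : M, x * (y * z) = (x * y) * z.
Proof.
  intros x y.
  indf (feq (tmul (tvar 2) (tmul (tvar 1) (tvar 0))) (tmul (tmul (tvar 2) (tvar 1)) (tvar 0)))
    (scons y (scons x env0)).
  - rewrite !Q6. reflexivity.
  - intros z H. rewrite !Q7, mul_add_r, H. reflexivity.
Qed.

Lemma mul_1_l : forall x : M, 1 * x = x.
Proof.
  intro x. rewrite <- (add_0_l 1), mul_S_l, mul_0_l, add_0_l. reflexivity.
Qed.

Lemma Msrt : @semi_ring_theory M 0 1 (@add M) (@mul M) eq.
Proof.
  constructor.
  - exact add_0_l.
  - exact add_comm.
  - exact add_assoc.
  - exact mul_1_l.
  - exact mul_0_l.
  - exact mul_comm.
  - exact mul_assoc.
  - intros x y z. rewrite !(mul_comm _ z). apply mul_add_r.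
Qed.

Add Ring Mring : Msrt.

Lemma test_ring (x y : M) : (x + y) * (x + y) = x * x + (1 + 1) * x * y + y * y.
Proof. ring. Qed.

Lemma add_cancel_r : forall x y z : M, x + z = y + z -> x = y.
Proof.
  intros x y.
  indf (fimp (feq (tadd (tvar 2) (tvar 0)) (tadd (tvar 1) (tvar 0))) (feq (tvar 2) (tvar 1)))
    (scons y (scons x env0)).
  - rewrite !Q4; auto.
  - intros z IH H. apply IH. apply Q2. rewrite <- !Q5. exact H.
Qed.

Lemma add_cancel_l : forall x y z : M, z + x = z + y -> x = y.
Proof. intros x y z H. apply (add_cancel_r x y z). rewrite !(add_comm _ z). exact H. Qed.

Lemma add_eq_0 : forall x y : M, x + y = 0 -> x = 0 /\ y = 0.
Proof.
  intros x y H. destruct (classic (y = 0)) as [Hy|Hy].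
  - subst. rewrite Q4 in H. auto.
  - destruct (Q3 y Hy) as [z Hz]. subst. rewrite Q5 in H. symmetry in H. now apply Q1 in H.
Qed.

Lemma add_eq_self : forall x z : M, x + z = x -> z = 0.
Proof. intros x z H. apply (add_cancel_l z 0 x). rewrite Q4. exact H. Qed.

Lemma le_refl : forall x : M, x <= x.
Proof. intro x. apply Q8. exists 0. apply Q4. Qed.

Lemma le_trans : forall x y z : M, x <= y -> y <= z -> x <= z.
Proof.
  intros x y z H1 H2. apply Q8 in H1 as [a Ha]. apply Q8 in H2 as [b Hb].
  apply Q8. exists (a + b). subst. ring.
Qed.

Lemma le_antisym : forall x y : M, x <= y -> y <= x -> x = y.
Proof.
  intros x y H1 H2. apply Q8 in H1 as [a Ha]. apply Q8 in H2 as [b Hb].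
  subst. assert (a + b = 0) as H. { apply (add_eq_self x). rewrite <- Hb at 2. ring. }
  apply add_eq_0 in H as [-> _]. symmetry; apply Q4.
Qed.

Lemma le_0_l : forall x : M, 0 <= x.
Proof. intro x. apply Q8. exists x. apply add_0_l. Qed.

Lemma le_add_r : forall x y : M, x <= x + y.
Proof. intros x y. apply Q8. exists y. reflexivity. Qed.

Lemma le_add_l : forall x y : M, x <= y + x.
Proof. intros x y. rewrite add_comm. apply le_add_r. Qed.

Lemma le_0_eq : forall x : M, x <= 0 -> x = 0.
Proof. intros x H. apply le_antisym; auto using le_0_l. Qed.

Lemma le_total0 : forall y x : M, x <= y \/ y <= x.
Proof.
  intro y. 
  indf (f_or (fle (tvar 0) (tvar 1)) (fle (tvar 1) (tvar 0))) (scons y env0).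
  - left. apply le_0_l.
  - intros x [H|H].
    + apply Q8 in H as [z Hz]. destruct (classic (z = 0)) as [Hz0|Hz0].
      * subst. right. rewrite Q4. apply le_add_r.
      * destruct (Q3 z Hz0) as [w Hw]. subst. left. apply Q8. exists w. ring.
    + right. eapply le_trans; [exact H| apply le_add_r].
Qed.

Lemma le_total : forall x y : M, x <= y \/ y <= x.
Proof. intros x y. apply le_total0. Qed.

Lemma lt_iff : forall x y : M, x < y <-> x + 1 <= y.
Proof.
  intros x y. unfold lt. split.
  - intros [H1 H2]. apply Q8 in H1 as [z Hz]. destruct (classic (z = 0)) as [Hz0|Hz0].
    + subst. rewrite Q4 in H2. tauto.
    + destruct (Q3 z Hz0) as [w Hw]. subst. apply Q8. exists w. ring.
  - intros H. apply Q8 in H as [z Hz]. split.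
    + apply Q8. exists (1 + z). rewrite <- Hz. ring.
    + intro E. rewrite <- E in Hz. apply (Q1 z). symmetry. rewrite add_comm.
      apply (add_eq_self x). rewrite add_assoc. exact Hz.
Qed.

Lemma lt_le : forall x y : M, x < y -> x <= y.
Proof. intros x y H. apply H. Qed.

Lemma not_le_lt : forall x y : M, ~ x <= y -> y < x.
Proof.
  intros x y H. split.
  - destruct (le_total x y); tauto.
  - intro E; subst; apply H; apply le_refl.
Qed.

Lemma lt_not_le : forall x y : M, x < y -> ~ y <= x.
Proof. intros x y [H1 H2] H3. apply H2. apply le_antisym; auto. Qed.

Lemma le_lt_dec : forall x y : M, x <= y \/ y < x.
Proof. intros x y. destruct (classic (x <= y)); auto using not_le_lt. Qed.

Lemma lt_trichotomy : forall x y : M, x < y \/ x = y \/ y < x.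
Proof.
  intros x y. destruct (le_lt_dec x y) as [H|H]; auto.
  destruct (classic (x = y)); auto. left; split; auto.
Qed.

Lemma lt_S : forall x y : M, x < y + 1 <-> x <= y.
Proof.
  intros x y. rewrite lt_iff. split; intro H.
  - apply Q8 in H as [z Hz]. apply Q8. exists z. apply (add_cancel_r _ _ 1). rewrite <- Hz. ring.
  - apply Q8 in H as [z Hz]. apply Q8. exists z. rewrite <- Hz. ring.
Qed.

Lemma lt_0_S : forall x : M, 0 < x + 1.
Proof. intro x. apply lt_S. apply le_0_l. Qed.

Lemma not_lt_0 : forall x : M, ~ x < 0.
Proof. intros x [H1 H2]. apply H2. apply le_0_eq; auto. Qed.

Lemma lt_0_neq : forall x : M, 0 < x <-> x <> 0.
Proof.
  intro x. split.
  - intros [_ H] E. subst. auto.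
  - intro H. split; auto using le_0_l.
Qed.

Lemma le_lt_trans : forall x y z : M, x <= y -> y < z -> x < z.
Proof. intros x y z H1 H2. apply lt_iff in H2. apply lt_iff. eapply le_trans; [|exact H2].
  apply Q8 in H1 as [a Ha]. apply Q8. exists a. rewrite <- Ha. ring. Qed.

Lemma lt_le_trans : forall x y z : M, x < y -> y <= z -> x < z.
Proof. intros x y z H1 H2. apply lt_iff in H1. apply lt_iff. eapply le_trans; eauto. Qed.

Lemma lt_trans : forall x y z : M, x < y -> y < z -> x < z.
Proof. intros x y z H1 H2. eapply lt_le_trans; eauto using lt_le. Qed.

Lemma le_add_mono : forall x y z w : M, x <= y -> z <= w -> x + z <= y + w.
Proof. intros x y z w H1 H2. apply Q8 in H1 as [a Ha]. apply Q8 in H2 as [b Hb].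
  apply Q8. exists (a + b). subst. ring. Qed.

Lemma le_add_cancel : forall x y z : M, x + z <= y + z -> x <= y.
Proof. intros x y z H. apply Q8 in H as [a Ha]. apply Q8. exists a.
  apply (add_cancel_r _ _ z). rewrite <- Ha. ring. Qed.

Lemma lt_add_mono : forall x y z : M, x < y -> x + z < y + z.
Proof. intros x y z H. apply lt_iff in H. apply lt_iff.
  replace (x + z + 1) with (x + 1 + z) by ring. apply le_add_mono; auto using le_refl. Qed.

Lemma lt_add_cancel : forall x y z : M, x + z < y + z -> x < y.
Proof. intros x y z H. apply lt_iff in H. apply lt_iff. apply (le_add_cancel _ _ z).
  replace (x + 1 + z) with (x + z + 1) by ring. auto. Qed.

Lemma le_mul_mono : forall x y z w : M, x <= y -> z <= w -> x * z <= y * w.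
Proof. intros x y z w H1 H2. apply Q8 in H1 as [a Ha]. apply Q8 in H2 as [b Hb].
  apply Q8. exists (x * b + a * z + a * b). subst. ring. Qed.

Lemma mul_eq_0 : forall x y : M, x * y = 0 -> x = 0 \/ y = 0.
Proof.
  intros x y H. destruct (classic (y = 0)) as [Hy|Hy]; auto.
  destruct (Q3 y Hy) as [z Hz]. subst. rewrite Q7 in H. apply add_eq_0 in H. tauto.
Qed.

Lemma le_neq0 : forall x : M, x <> 0 -> 1 <= x.
Proof. intros x H. destruct (Q3 x H) as [y ->]. rewrite add_comm. apply le_add_r. Qed.

Lemma le_mul_r : forall x y : M, y <> 0 -> x <= x * y.
Proof. intros x y H. rewrite <- (mul_1_l x) at 1. rewrite (mul_comm 1 x).
  apply le_mul_mono; auto using le_refl, le_neq0. Qed.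

Lemma le_mul_cancel : forall x y z : M, z <> 0 -> x * z <= y * z -> x <= y.
Proof.
  intros x y z Hz H. destruct (le_lt_dec x y) as [H1|H1]; auto.
  apply lt_iff in H1. exfalso.
  assert (Hle : (y + 1) * z <= x * z) by (apply le_mul_mono; auto using le_refl).
  assert (Hle2 : (y + 1) * z <= y * z) by (eapply le_trans; eauto).
  rewrite mul_S_l in Hle2. apply Q8 in Hle2 as [a Ha].
  rewrite <- add_assoc in Ha. apply add_eq_self in Ha. apply add_eq_0 in Ha. tauto.
Qed.

Lemma mul_cancel : forall x y z : M, z <> 0 -> x * z = y * z -> x = y.
Proof.
  intros x y z Hz H. apply le_antisym; apply (le_mul_cancel _ _ z); auto; rewrite H; apply le_refl.
Qed.

Lemma lt_mul_mono : forall x y z : M, z <> 0 -> x < y -> x * z < y * z.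
Proof.
  intros x y z Hz H. destruct (le_lt_dec (y * z) (x * z)) as [H1|H1]; auto.
  apply le_mul_cancel in H1; auto. exfalso. eapply lt_not_le; eauto.
Qed.

Lemma lt_mul_cancel : forall x y z : M, x * z < y * z -> x < y.
Proof.
  intros x y z H. destruct (le_lt_dec y x) as [H1|H1]; auto.
  exfalso. apply (lt_not_le _ _ H). apply le_mul_mono; auto using le_refl.
Qed.

Lemma one_neq_0 : (1 : M) <> 0.
Proof. rewrite <- (add_0_l 1). intro H. symmetry in H. exact (Q1 _ H). Qed.

Lemma lt_0_1 : (0 : M) < 1.
Proof. apply lt_0_neq. apply one_neq_0. Qed.

Lemma le_1_lt0 : forall x : M, 1 <= x -> 0 < x.
Proof. intros x H. eapply lt_le_trans; eauto using lt_0_1. Qed.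

Lemma lt_1_le : forall x : M, 0 < x -> 1 <= x.
Proof. intros x H. apply lt_iff in H. rewrite add_0_l in H. auto. Qed.

Lemma le_sub : forall x y : M, x <= y -> exists z, y = x + z.
Proof. intros x y H. apply Q8 in H as [z Hz]. eauto. Qed.

Lemma lt_sub : forall x y : M, x < y -> exists z, y = x + z + 1.
Proof. intros x y H. apply lt_iff in H. apply Q8 in H as [z Hz]. exists z. rewrite <- Hz. ring. Qed.

Lemma sat_lt (env : nat -> M) t u : sat env (fltf t u) <-> teval env t < teval env u.
Proof. unfold fltf, lt. simpl. tauto. Qed.

Lemma le_k_mul : forall d k : M, d <> 0 -> k <= d * k.
Proof. intros d k H. rewrite mul_comm. apply le_mul_r; auto. Qed.

Lemma sat_div (env : nat -> M) t u : sat env (fdivf t u) <-> divides (teval env t) (teval env u).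
Proof.
  unfold fdivf. cbn [sat teval scons]. setoid_rewrite teval_lift. split.
  - intros [k [_ Hk]]. exists k. exact Hk.
  - intros [k Hk]. destruct (classic (teval env t = 0)) as [H0|H0].
    + exists 0. rewrite H0 in *. rewrite mul_0_l in Hk. rewrite <- Hk, Q6. split; auto using le_refl.
    + exists k. split; auto. rewrite <- Hk. apply le_k_mul; auto.
Qed.

Lemma div_le : forall d n : M, divides d n -> n <> 0 -> d <= n.
Proof.
  intros d n [k Hk] Hn. subst. destruct (classic (k = 0)) as [ -> |Hk]. 
  - rewrite Q6 in Hn. tauto.
  - apply le_mul_r; auto.
Qed.

Lemma sat_prime (env : nat -> M) t : sat env (fprimef t) <-> prime (teval env t).
Proof.
  unfold fprimef. cbn [sat]. rewrite sat_lt. unfold prime. cbn [teval].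
  split; intros [H1 H2]; split; auto.
  - intros d Hd. assert (Hp : teval env t <> 0).
    { intro E. rewrite E in H1. eapply not_lt_0. exact H1. }
    specialize (H2 d (div_le _ _ Hd Hp)). cbn [sat] in H2.
    rewrite sat_div in H2. cbn [teval scons] in H2. rewrite !teval_lift in H2.
    destruct (H2 Hd) as [E|E]; auto.
  - intros d _. cbn [sat]. rewrite sat_div. cbn [teval scons]. rewrite !teval_lift.
    intro Hd. destruct (H2 d Hd); auto.
Qed.

Lemma LNP (phi : form) (env : nat -> M) (P : M -> Prop) :
  isDelta0 phi -> (forall x, sat (scons x env) phi <-> P x) ->
  forall a, P a -> exists m, P m /\ forall y, P y -> m <= y.
Proof.
  intros Hd HP a Ha. apply NNPP. intro Hno.
  assert (G : forall x y, y <= x -> ~ P y).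
  { apply (IND (fball (tvar 0) (fnot (frename (uprn S) phi))) env (fun x => forall y, y <= x -> ~ P y)).
    - left. simpl. apply delta0_rename. exact Hd.
    - intro x. cbn [sat teval scons]. split; intros G y Hy; specialize (G y Hy).
      + intro Py. apply G. apply sat_rename. apply HP in Py.
        eapply sat_ext; [|exact Py]. intros [|n]; reflexivity.
      + intro Hs. apply G. rewrite sat_rename in Hs. apply HP.
        eapply sat_ext; [|exact Hs]. intros [|n]; reflexivity.
    - intros y Hy Py. apply le_0_eq in Hy. subst. apply Hno. exists 0. split; auto using le_0_l.
    - intros x IH y Hy Py. destruct (le_lt_dec y x) as [H1|H1].
      + exact (IH y H1 Py).
      + assert (y = x + 1) as ->.
        { apply le_antisym; [exact Hy | exact (proj1 (lt_iff x y) H1)]. }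
        apply Hno. exists (x + 1). split; auto.
        intros z Pz. destruct (le_lt_dec (x + 1) z) as [H2|H2]; auto.
        apply lt_S in H2. exfalso. exact (IH z H2 Pz). }
  exact (G a a (le_refl a) Ha).
Qed.

Lemma divmod_exists : forall m : M, m <> 0 -> forall x : M, exists q r, x = q * m + r /\ r < m.
Proof.
  intros m Hm.
  indf (fex (fex (fand (feq (tvar 2) (tadd (tmul (tvar 1) (tvar 3)) (tvar 0))) (fltf (tvar 0) (tvar 3)))))
    (scons m env0).
  - exists 0, 0. split. ring. apply lt_0_neq; auto.
  - intros x [q [r [-> Hr]]]. destruct (classic (r + 1 = m)) as [E|E].
    + exists (q + 1), 0. split. rewrite <- E. ring. apply lt_0_neq; auto.
    + exists q, (r + 1). split. ring. split; [exact (proj1 (lt_iff r m) Hr) | exact E].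
Qed.

Lemma divmod_unique : forall m q1 r1 q2 r2 : M,
  q1 * m + r1 = q2 * m + r2 -> r1 < m -> r2 < m -> q1 = q2 /\ r1 = r2.
Proof.
  assert (K : forall m q1 r1 q2 r2 : M, q1 * m + r1 = q2 * m + r2 -> r1 < m -> q1 < q2 -> False).
  { intros m q1 r1 q2 r2 E H1 H2. apply lt_sub in H2 as [k ->].
    assert (r1 = (k + 1) * m + r2) as E2.
    { apply (add_cancel_l _ _ (q1 * m)). rewrite E. ring. }
    apply (lt_not_le _ _ H1). rewrite E2. eapply le_trans; [|apply le_add_r].
    rewrite mul_S_l. apply le_add_l. }
  intros m q1 r1 q2 r2 E H1 H2.
  destruct (lt_trichotomy q1 q2) as [L|[L|L]].
  - exfalso; eauto.
  - subst. split; auto. eapply add_cancel_l; eauto.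
  - exfalso. symmetry in E. eauto.
Qed.

Lemma div_refl : forall a : M, divides a a.
Proof. intro a. exists 1. ring. Qed.

Lemma div_0 : forall a : M, divides a 0.
Proof. intro a. exists 0. apply Q6. Qed.

Lemma div_1_l : forall a : M, divides 1 a.
Proof. intro a. exists a. ring. Qed.

Lemma div_trans : forall a b c : M, divides a b -> divides b c -> divides a c.
Proof. intros a b c [k Hk] [l Hl]. exists (k * l). subst. ring. Qed.

Lemma div_mul_r : forall a b c : M, divides a b -> divides a (b * c).
Proof. intros a b c [k Hk]. exists (k * c). subst. ring. Qed.

Lemma div_mul_l : forall a b c : M, divides a b -> divides a (c * b).
Proof. intros a b c H. rewrite mul_comm. apply div_mul_r; auto. Qed.

Lemma div_mul_mono : forall a b c d : M, divides a b -> divides c d -> divides (a * c) (b * d).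
Proof. intros a b c d [k Hk] [l Hl]. exists (k * l). subst. ring. Qed.

Lemma div_add : forall a b c : M, divides a b -> divides a c -> divides a (b + c).
Proof. intros a b c [k Hk] [l Hl]. exists (k + l). subst. ring. Qed.

Lemma div_sub : forall a b c : M, divides a (b + c) -> divides a b -> divides a c.
Proof.
  intros a b c [k Hk] [l Hl]. destruct (classic (a = 0)) as [ -> |Ha].
  - rewrite mul_0_l in *. subst. symmetry in Hk. rewrite add_0_l in Hk. subst. apply div_0.
  - assert (l <= k). { apply (le_mul_cancel _ _ a); auto. rewrite !(mul_comm _ a). rewrite Hk, Hl. apply le_add_r. }
    apply le_sub in H as [j ->]. exists j. apply (add_cancel_l _ _ b). rewrite <- Hk, <- Hl. ring.
Qed.

Lemma div_one : forall d : M, divides d 1 -> d = 1.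
Proof.
  intros d Hd. apply le_antisym.
  - apply div_le; auto using one_neq_0.
  - apply le_neq0. intro E. subst. destruct Hd as [k Hk]. rewrite mul_0_l in Hk. apply one_neq_0. auto.
Qed.

Lemma div_antisym : forall a b : M, divides a b -> divides b a -> a = b.
Proof.
  intros a b Hab Hba. destruct (classic (a = 0)) as [ -> |Ha].
  - destruct Hab as [k Hk]. rewrite mul_0_l in Hk. auto.
  - destruct (classic (b = 0)) as [ -> |Hb].
    + destruct Hba as [k Hk]. rewrite mul_0_l in Hk. auto.
    + apply le_antisym; apply div_le; auto.
Qed.

Lemma div_mul_cancel : forall a b c : M, c <> 0 -> divides (a * c) (b * c) -> divides a b.
Proof.
  intros a b c Hc [k Hk]. exists k. apply (mul_cancel _ _ c); auto. rewrite <- Hk. ring.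
Qed.

Lemma lt_1_neq : forall p : M, 1 < p -> p <> 0 /\ p <> 1.
Proof.
  intros p H. split.
  - intro E. subst. eapply not_lt_0; eauto.
  - intro E. subst. destruct H; auto.
Qed.

Lemma prime_neq : forall p : M, prime p -> p <> 0 /\ p <> 1.
Proof. intros p [H _]. apply lt_1_neq; auto. Qed.

Lemma euclid : forall p a b : M, prime p -> divides p (a * b) -> divides p a \/ divides p b.
Proof.
  intros p a b Hp Hab. destruct (prime_neq p Hp) as [Hp0 Hp1].
  destruct (LNP (fand (fnot (feq (tvar 0) tzero)) (fdivf (tvar 1) (tmul (tvar 0) (tvar 2))))
    (scons p (scons b env0)) (fun n => n <> 0 /\ divides p (n * b))) with (a := p)
    as [m [[Hm0 Hm] Hmin]].
  - simpl; tauto.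
  - intro x. cbn [sat]. rewrite sat_div. cbn [teval scons]. tauto.
  - split; auto. apply div_mul_r, div_refl.
  - assert (Gen : forall z, divides p (z * b) -> divides m z).
    { intros z Hz. destruct (divmod_exists m Hm0 z) as [q [r [Ez Hr]]].
      destruct (classic (r = 0)) as [ -> |Hr0].
      - exists q. rewrite Ez. ring.
      - exfalso. assert (divides p (r * b)).
        { apply (div_sub _ (q * (m * b))). rewrite Ez in Hz.
          replace (q * (m * b) + r * b) with ((q * m + r) * b) by ring. auto.
          apply div_mul_l; auto. }
        apply (lt_not_le _ _ Hr). apply Hmin. split; auto. }
    assert (Hmp : divides m p) by (apply Gen; apply div_mul_r, div_refl).
    destruct (proj2 Hp m Hmp) as [ -> | -> ].
    + right. rewrite mul_1_l in Hm. exact Hm.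
    + left. apply Gen. exact Hab.
Qed.

Lemma prime_div_exists : forall e : M, e <> 0 -> e <> 1 -> exists p, prime p /\ divides p e.
Proof.
  intros e He0 He1.
  destruct (LNP (fand (fltf tone (tvar 0)) (fdivf (tvar 0) (tvar 1))) (scons e env0)
     (fun d => 1 < d /\ divides d e)) with (a := e) as [d [[Hd1 Hde] Hmin]].
  - simpl; tauto.
  - intro x. cbn [sat]. rewrite sat_lt, sat_div. cbn [teval scons]. tauto.
  - split; [|apply div_refl]. split; [apply le_neq0; auto|auto].
  - exists d. split; auto. split; auto. intros d' Hd'.
    destruct (lt_1_neq d Hd1) as [Hd0 _].
    destruct (classic (d' = 1)); auto. destruct (classic (d' = d)); auto.
    exfalso. assert (d' <> 0).
    { intro E. subst. destruct Hd' as [k Hk]. rewrite mul_0_l in Hk. auto. }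
    assert (d <= d').
    { apply Hmin. split. split; auto. apply le_neq0; auto. eapply div_trans; eauto. }
    apply H0. apply le_antisym; auto. apply div_le; auto.
Qed.

Lemma coprime_mul : forall a b c : M, coprime a c -> coprime b c -> coprime (a * b) c.
Proof.
  intros a b c Ha Hb d Hd1 Hd2. apply NNPP. intro Hne.
  destruct (classic (d = 0)) as [ -> |Hd0].
  - destruct Hd2 as [k Hk]. rewrite mul_0_l in Hk. subst.
    assert (a = 1) by (apply Ha; [apply div_refl|apply div_0]).
    assert (b = 1) by (apply Hb; [apply div_refl|apply div_0]).
    subst. destruct Hd1 as [k2 Hk2]. rewrite mul_0_l in Hk2. apply one_neq_0. rewrite Hk2. ring.
  - destruct (prime_div_exists d Hd0 Hne) as [p [Hp Hpd]].
    destruct (prime_neq p Hp) as [_ Hp1].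
    destruct (euclid p a b Hp (div_trans _ _ _ Hpd Hd1)) as [H|H].
    + apply Hp1. apply Ha; [exact H | exact (div_trans _ _ _ Hpd Hd2)].
    + apply Hp1. apply Hb; [exact H | exact (div_trans _ _ _ Hpd Hd2)].
Qed.

Lemma coprime_sym : forall a b : M, coprime a b -> coprime b a.
Proof. intros a b H d H1 H2. auto. Qed.

Lemma coprime_1 : forall a : M, coprime a 1.
Proof. intros a d _ H. apply div_one; auto. Qed.

Lemma coprime_S : forall a : M, coprime a (a + 1).
Proof. intros a d H1 H2. apply div_one. eapply div_sub; eauto. Qed.

Lemma rad_exists : forall n : M, n <> 0 -> exists r, isRad n r.
Proof.
  intros n Hn.
  destruct (LNP (fand (fnot (feq (tvar 0) tzero)) (fand (fdivf (tvar 0) (tvar 1))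
      (fball (tvar 1) (fimp (fprimef (tvar 0)) (fimp (fdivf (tvar 0) (tvar 2)) (fdivf (tvar 0) (tvar 1)))))))
      (scons n env0)
      (fun s => s <> 0 /\ divides s n /\ forall p, p <= n -> prime p -> divides p n -> divides p s))
    with (a := n) as [r [[Hr0 [Hrn Hrp]] Hmin]].
  - simpl; tauto.
  - intro x. cbn [sat]. setoid_rewrite sat_prime. setoid_rewrite sat_div. cbn [teval scons]. reflexivity.
  - split; auto. split; [apply div_refl|]. intros; assumption.
  - exists r. split; [apply lt_0_neq; auto|]. split; auto. split.
    + intros p Hp Hpn. apply Hrp; auto. apply div_le; auto.
    + intros s Hs Hsn Hsp. apply Hmin. split; [apply lt_0_neq; auto|]. split; auto.
Qed.

Lemma le_S_cases : forall x y : M, x <= y + 1 -> x <= y \/ x = y + 1.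
Proof.
  intros x y H. destruct (classic (x = y + 1)); auto. left. apply lt_S. split; auto.
Qed.

Definition modl (D i : M) : M := 1 + (i + 1) * D.
Definition betaR (c D i v : M) : Prop := exists q, c = q * modl D i + v /\ v < modl D i.

Lemma modl_neq0 : forall D i, modl D i <> 0.
Proof. intros D i E. unfold modl in E. rewrite add_comm in E. symmetry in E. exact (Q1 _ E). Qed.

Lemma teval_modt (env : nat -> M) tD ti : teval env (tmodt tD ti) = modl (teval env tD) (teval env ti).
Proof. reflexivity. Qed.

Lemma sat_beta (env : nat -> M) tc tD ti tv :
  sat env (fbetaf tc tD ti tv) <-> betaR (teval env tc) (teval env tD) (teval env ti) (teval env tv).
Proof.
  unfold fbetaf. cbn [sat]. setoid_rewrite sat_lt. cbn [teval scons]. setoid_rewrite teval_lift.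
  rewrite teval_modt. unfold betaR. split.
  - intros [q [_ H]]. exists q. exact H.
  - intros [q [Hq Hv]]. exists q. split; [|split; auto]. rewrite Hq.
    eapply le_trans; [|apply le_add_r]. apply le_mul_r. apply modl_neq0.
Qed.

Lemma beta_fun : forall c D i v v', betaR c D i v -> betaR c D i v' -> v = v'.
Proof.
  intros c D i v v' [q [E1 H1]] [q' [E2 H2]]. rewrite E1 in E2.
  apply (divmod_unique _ _ _ _ _ E2 H1 H2).
Qed.

Lemma beta_exists : forall c D i, exists v, betaR c D i v.
Proof.
  intros c D i. destruct (divmod_exists (modl D i) (modl_neq0 D i) c) as [q [r [E H]]].
  exists r, q. auto.
Qed.

Lemma beta_le : forall c D i v, betaR c D i v -> v <= c.
Proof. intros c D i v [q [E _]]. rewrite E. apply le_add_l. Qed.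

Lemma beta_small : forall D i v, v < modl D i -> betaR v D i v.
Proof. intros D i v H. exists 0. split; auto. ring. Qed.

Lemma beta_shift : forall c D i v t P, betaR c D i v -> divides (modl D i) P -> betaR (c + t * P) D i v.
Proof.
  intros c D i v t P [q [E H]] [k Hk]. exists (q + t * k). split; auto.
  rewrite E, <- Hk. ring.
Qed.

Lemma beta_eq : forall c D i v q, c = q * modl D i + v -> v < modl D i -> betaR c D i v.
Proof. intros. exists q. auto. Qed.

Ltac satsimp := cbn [sat]; repeat first [setoid_rewrite sat_div | setoid_rewrite sat_lt
   | setoid_rewrite sat_beta | setoid_rewrite sat_prime]; cbn [teval scons].

Ltac indg phi env := match goal with |- forall z, @?P z =>
  apply (IND phi env P); [simpl; tauto | intro; unfold id; satsimp; reflexivity | |] end.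

Lemma inverse_exists : forall P m : M, m <> 0 -> m <> 1 -> coprime P m ->
  exists s q, s * P = q * m + 1.
Proof.
  intros P m Hm0 Hm1 Hcop.
  destruct (Q3 m Hm0) as [m1 Hm1e].
  set (Gu := fun g => exists s q, s * P = q * m + g).
  assert (Gb : forall g, g < m -> Gu g -> exists s q, s <= m /\ q <= s * P /\ s * P = q * m + g).
  { intros g Hg [s [q E]].
    destruct (divmod_exists m Hm0 s) as [s1 [s2 [Es Hs2]]].
    destruct (divmod_exists m Hm0 (s2 * P)) as [q2 [g2 [Eq2 Hg2]]].
    assert (q * m + g = (s1 * P + q2) * m + g2) as E3.
    { rewrite <- E, Es. replace ((s1 * m + s2) * P) with (s1 * P * m + s2 * P) by ring.
      rewrite Eq2. ring. }
    destruct (divmod_unique _ _ _ _ _ E3 Hg Hg2) as [_ <-].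
    exists s2, q2. split; [apply lt_le; auto|]. split; auto.
    rewrite Eq2. eapply le_trans; [|apply le_add_r]. apply le_mul_r; auto. }
  destruct (divmod_exists m Hm0 P) as [q0 [g0 [EP0 Hg0]]].
  assert (Hg00 : g0 <> 0).
  { intro E. subst g0. apply Hm1. apply Hcop; [|apply div_refl]. exists q0. rewrite EP0. ring. }
  assert (Gg0 : Gu g0) by (exists 1, q0; rewrite EP0; ring).
  destruct (Gb g0 Hg0 Gg0) as [s0 [q1 [Hs0 [Hq1 E0]]]].
  destruct (LNP (fand (fnot (feq (tvar 0) tzero)) (fand (fltf (tvar 0) (tvar 1))
       (fbex (tvar 1) (fbex (tmul (tvar 0) (tvar 3))
          (feq (tmul (tvar 1) (tvar 4)) (tadd (tmul (tvar 0) (tvar 3)) (tvar 2)))))))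
     (scons m (scons P env0))
     (fun g => g <> 0 /\ g < m /\ exists s, s <= m /\ exists q, q <= s * P /\ s * P = q * m + g))
    with (a := g0) as [g [[Hg0' [Hgm [s [_ [q [_ Hsq]]]]]] Hmin]].
  - simpl; tauto.
  - intro x. cbn [sat]. rewrite sat_lt. cbn [teval scons]. reflexivity.
  - split; auto. split; auto. exists s0. split; auto. exists q1. auto.
  - assert (Memb : forall r, r <> 0 -> r < m -> Gu r -> g <= r).
    { intros r Hr0 Hrm Gr. destruct (Gb r Hrm Gr) as [s2 [q2 [H1 [H2 H3]]]].
      apply Hmin. split; auto. split; auto. exists s2. split; auto. exists q2. auto. }
    assert (Hdm : divides g m).
    { destruct (divmod_exists g Hg0' m) as [k [r [Em Hr]]].
      destruct (classic (r = 0)) as [Hr0|Hr0].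
      - exists k. rewrite Em, Hr0. ring.
      - exfalso.
        assert (Hkg0 : k * g <> 0).
        { intro E. rewrite E, add_0_l in Em. subst r.
          apply (lt_not_le _ _ Hgm). apply lt_le. auto. }
        destruct (Q3 _ Hkg0) as [kap Hkap].
        assert (Hm1k : m1 = kap + r).
        { apply (add_cancel_r _ _ 1). rewrite <- Hm1e, Em, Hkap. ring. }
        assert (Grr : Gu r).
        { exists (m1 * k * s), (k * q * m1 + kap).
          replace (m1 * k * s * P) with (m1 * k * (s * P)) by ring. rewrite Hsq.
          replace (m1 * k * (q * m + g)) with (m1 * k * q * m + m1 * (k * g)) by ring.
          rewrite Hkap, Hm1e, Hm1k. ring. }
        apply (lt_not_le _ _ Hr). apply Memb; auto. eapply lt_trans; eauto. }
    assert (HdP : divides g P).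
    { destruct (divmod_exists g Hg0' P) as [k [r [EP Hr]]].
      destruct (classic (r = 0)) as [Hr0|Hr0].
      - exists k. rewrite EP, Hr0. ring.
      - exfalso.
        assert (Grr : Gu r).
        { exists (1 + m1 * k * s), (k * q * m1 + k * g).
          replace ((1 + m1 * k * s) * P) with (P + m1 * k * (s * P)) by ring. rewrite Hsq.
          rewrite EP at 1. rewrite Hm1e. ring. }
        apply (lt_not_le _ _ Hr). apply Memb; auto. eapply lt_trans; eauto. }
    assert (g = 1) by (apply Hcop; auto). subst g.
    exists s, q. exact Hsq.
Qed.

Lemma crt_step : forall P m a c : M, m <> 0 -> coprime P m -> a < m ->
  exists t q, c + t * P = q * m + a.
Proof.
  intros P m a c Hm0 Hcop Ha.
  destruct (classic (m = 1)) as [->|Hm1].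
  - assert (a = 0) as ->. { apply le_0_eq. apply lt_S. rewrite add_0_l. auto. }
    exists 0, c. ring.
  - destruct (inverse_exists P m Hm0 Hm1 Hcop) as [s [q0 E]].
    destruct (Q3 m Hm0) as [m1 Hm1e].
    exists ((a + m1 * c) * s), (c + (a + m1 * c) * q0).
    replace (c + (a + m1 * c) * s * P) with (c + (a + m1 * c) * (s * P)) by ring.
    rewrite E, Hm1e. ring.
Qed.

Lemma fact_exists : forall u : M, exists D, D <> 0 /\ forall k, k <= u -> k <> 0 -> divides k D.
Proof.
  indg (fex (fand (fnot (feq (tvar 0) tzero))
          (fball (tvar 1) (fimp (fnot (feq (tvar 0) tzero)) (fdivf (tvar 0) (tvar 1)))))) env0.
  - exists 1. split; [apply one_neq_0|]. intros k Hk Hk0. exfalso. apply Hk0. apply le_0_eq; auto.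
  - intros u [D [HD H]]. exists (D * (u + 1)). split.
    + intro E. apply mul_eq_0 in E as [E|E]; [auto| symmetry in E; exact (Q1 _ E)].
    + intros k Hk Hk0. apply le_S_cases in Hk as [Hk| ->].
      * apply div_mul_r. auto.
      * apply div_mul_l. apply div_refl.
Qed.

Lemma moduli_coprime : forall D u i j : M,
  (forall k, k <= u -> k <> 0 -> divides k D) -> i < j -> j <= u ->
  coprime (modl D i) (modl D j).
Proof.
  intros D u i j HD Hij Hju e He1 He2. apply NNPP. intro Hne.
  assert (He0 : e <> 0).
  { intro E. subst. destruct He1 as [k Hk]. rewrite mul_0_l in Hk. symmetry in Hk.
    exact (modl_neq0 D i Hk). }
  destruct (prime_div_exists e He0 Hne) as [p [Hp Hpe]].
  destruct (prime_neq p Hp) as [Hp0 Hp1].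
  apply lt_sub in Hij as [dl Edl]. subst j.
  assert (H1 : divides p ((dl + 1) * D)).
  { apply (div_sub _ (modl D i)); [|eapply div_trans; eauto].
    replace (modl D i + (dl + 1) * D) with (modl D (i + dl + 1)) by (unfold modl; ring).
    eapply div_trans; eauto. }
  assert (H2 : divides p D).
  { destruct (euclid _ _ _ Hp H1) as [H|H]; auto.
    eapply div_trans; [exact H|]. apply HD.
    - eapply le_trans; [|exact Hju]. rewrite <- add_assoc. apply le_add_l.
    - intro E. symmetry in E. exact (Q1 _ E). }
  apply Hp1. apply div_one. apply (div_sub _ ((i + 1) * D)).
  - replace ((i + 1) * D + 1) with (modl D i) by (unfold modl; ring). exact (div_trans _ _ _ Hpe He1).
  - apply div_mul_l. auto.
Qed.


Definition crtS (n c d w D : M) (j : M) : Prop :=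
  exists c', exists P, ~ P = 0 /\
   ((forall k, k <= n + 1 -> j < k -> forall e, e <= P -> divides e P -> divides e (modl D k) -> e = 1) /\
   ((forall i, i <= j -> i <= n + 1 -> divides (modl D i) P) /\
   ((forall i, i <= j -> i <= n -> forall v, v <= c -> betaR c d i v -> betaR c' D i v) /\
    (n + 1 <= j -> betaR c' D (n + 1) w)))).

Local Notation crtF :=
  (fex (fex (fand (fnot (feq (tvar 0) tzero))
   (fand (fball (tadd (tvar 3) tone)
          (fimp (fltf (tvar 3) (tvar 0))
            (fball (tvar 1)
              (fimp (fdivf (tvar 0) (tvar 2)) (fimp (fdivf (tvar 0) (tmodt (tvar 9) (tvar 1))) (feq (tvar 0) tone))))))
   (fand (fball (tvar 2)
          (fimp (fle (tvar 0) (tadd (tvar 4) tone)) (fdivf (tmodt (tvar 8) (tvar 0)) (tvar 1))))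
   (fand (fball (tvar 2)
          (fimp (fle (tvar 0) (tvar 4))
            (fball (tvar 5)
              (fimp (fbetaf (tvar 6) (tvar 7) (tvar 1) (tvar 0)) (fbetaf (tvar 3) (tvar 9) (tvar 1) (tvar 0))))))
      (fimp (fle (tadd (tvar 3) tone) (tvar 2)) (fbetaf (tvar 1) (tvar 7) (tadd (tvar 3) tone) (tvar 6))))))))) (only parsing).

Lemma crtS_all : forall n c d w D u : M,
  D <> 0 -> (forall k, k <= u -> k <> 0 -> divides k D) ->
  c < u -> w < u -> n + 1 <= u -> forall j, crtS n c d w D j.
Proof.
  intros n c d w D u HD0 HD Hcu Hwu Hnu.
  assert (Hud : u <= D).
  { apply div_le; auto. apply HD; [apply le_refl|]. intro E; subst u. eapply not_lt_0; eauto. }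
  assert (Hbig : forall i v, v < u -> v < modl D i).
  { intros i v Hv. eapply lt_le_trans; [exact Hv|]. eapply le_trans; [exact Hud|].
    unfold modl. eapply le_trans; [|apply le_add_l]. rewrite mul_comm. apply le_mul_r.
    intro E. symmetry in E. exact (Q1 _ E). }
  assert (Hcop : forall P k, P <> 0 -> (forall e, e <= P -> divides e P -> divides e (modl D k) -> e = 1) ->
     coprime P (modl D k)).
  { intros P k HP H e H1 H2. apply H; auto. apply div_le; auto. }
  assert (Hmc : forall i j, i < j -> j <= n + 1 -> coprime (modl D i) (modl D j)).
  { intros i j Hij Hj. apply (moduli_coprime D u); auto. eapply le_trans; eauto. }
  assert (Hn0 : ~ n + 1 <= 0).
  { intro H. apply le_0_eq in H. symmetry in H. exact (Q1 _ H). }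
  unfold crtS.
  indg (id crtF) (scons n (scons c (scons d (scons w (scons D env0))))).
  - destruct (beta_exists c d 0) as [a0 Ha0].
    assert (Ha0u : a0 < u) by (eapply le_lt_trans; [eapply beta_le; eauto| auto]).
    exists a0, (modl D 0). split; [apply modl_neq0|]. split; [|split; [|split]].
    + intros k Hk H0k e He H1 H2. apply (Hmc 0 k); auto.
    + intros i Hi _. apply le_0_eq in Hi. subst. apply div_refl.
    + intros i Hi _ v _ Hv. apply le_0_eq in Hi. subst.
      rewrite (beta_fun _ _ _ _ _ Hv Ha0). apply beta_small. auto.
    + intro H. contradiction.
  - intros j [c' [P [HP0 [C1 [C2 [C3 C4]]]]]].
    destruct (le_lt_dec (j + 1) (n + 1)) as [Hjn|Hjn].
    + assert (Ht : exists a, a < u /\ (j + 1 <= n -> forall v, betaR c d (j + 1) v -> v = a) /\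
                     (j + 1 = n + 1 -> a = w)).
      { destruct (classic (j + 1 <= n)) as [H|H].
        - destruct (beta_exists c d (j + 1)) as [a Ha]. exists a. split.
          + eapply le_lt_trans; [eapply beta_le; eauto| auto].
          + split.
            * intros _ v Hv. eapply beta_fun; eauto.
            * intro E. exfalso. rewrite E in H. apply (lt_not_le n (n + 1)); auto.
              apply lt_S, le_refl.
        - exists w. split; auto. split; [tauto|auto]. }
      destruct Ht as [a [Hau [Ht1 Ht2]]].
      assert (HcopP : coprime P (modl D (j + 1))).
      { apply Hcop; auto. apply C1; auto. apply lt_S, le_refl. }
      destruct (crt_step P (modl D (j + 1)) a c' (modl_neq0 _ _) HcopP (Hbig _ _ Hau)) as [t [q Eq]].
      exists (c' + t * P), (P * modl D (j + 1)). split; [|split; [|split; [|split]]].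
      * intro E. apply mul_eq_0 in E as [E|E]; auto. exact (modl_neq0 _ _ E).
      * intros k Hk Hjk e He H1 H2.
        assert (Hjk' : j < k) by (eapply lt_trans; [apply lt_S, le_refl| exact Hjk]).
        apply (coprime_mul P (modl D (j + 1)) (modl D k) (Hcop P k HP0 (C1 k Hk Hjk'))
           (Hmc (j + 1) k Hjk Hk)); auto.
      * intros i Hi Hin. apply le_S_cases in Hi as [Hi| ->].
        -- apply div_mul_r. auto.
        -- apply div_mul_l. apply div_refl.
      * intros i Hi Hin v Hvc Hv. apply le_S_cases in Hi as [Hi| ->].
        -- apply beta_shift; auto. apply C2; auto. eapply le_trans; [exact Hin|apply le_add_r].
        -- rewrite (Ht1 Hin v Hv). apply (beta_eq _ _ _ _ q); auto.
      * intro Hnj. apply le_S_cases in Hnj as [Hnj|Hnj].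
        -- apply beta_shift; auto. apply C2; auto. apply le_refl.
        -- rewrite Hnj. rewrite <- (Ht2 (eq_sym Hnj)). apply (beta_eq _ _ _ _ q); auto.
    + assert (Hnj : n + 1 <= j) by (apply lt_S; auto).
      exists c', P. split; auto. split; [|split; [|split]].
      * intros k Hk Hjk. apply C1; auto. eapply lt_trans; [apply lt_S, le_refl|exact Hjk].
      * intros i Hi Hin. apply C2; auto. eapply le_trans; eauto.
      * intros i Hi Hin. apply C3; auto. eapply le_trans; [exact Hin|].
        eapply le_trans; [apply le_add_r|exact Hnj].
      * intros _. apply C4; auto.
Qed.

Lemma extension : forall c d n w : M, exists c' D,
  (forall i v, i <= n -> betaR c d i v -> betaR c' D i v) /\ betaR c' D (n + 1) w.
Proof.
  intros c d n w.
  set (u := c + w + n + 1).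
  destruct (fact_exists u) as [D [HD0 HD]].
  assert (Hcu : c < u).
  { unfold u. apply lt_S. eapply le_trans; [apply (le_add_r c w)|apply le_add_r]. }
  assert (Hwu : w < u).
  { unfold u. apply lt_S. eapply le_trans; [apply (le_add_l w c)|apply le_add_r]. }
  assert (Hnu : n + 1 <= u).
  { unfold u. apply le_add_mono; [apply le_add_l|apply le_refl]. }
  destruct (crtS_all n c d w D u HD0 HD Hcu Hwu Hnu (n + 1)) as [c' [P [_ [_ [_ [C3 C4]]]]]].
  exists c', D. split.
  - intros i v Hi Hv. apply C3; auto.
    + eapply le_trans; [exact Hi|apply le_add_r].
    + eapply beta_le; eauto.
  - apply C4. apply le_refl.
Qed.

Definition expG (x y z : M) : Prop :=
  exists c, exists D, betaR c D 0 1 /\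
   ((forall i, i <= y -> i < y -> exists v, v <= c /\ (betaR c D i v /\ betaR c D (i + 1) (v * x))) /\
    betaR c D y z).

Local Notation expF :=
  (fex (fex (fand (fbetaf (tvar 1) (tvar 0) tzero tone)
    (fand (fball (tvar 3) (fimp (fltf (tvar 0) (tvar 4))
       (fbex (tvar 2) (fand (fbetaf (tvar 3) (tvar 2) (tvar 1) (tvar 0))
                           (fbetaf (tvar 3) (tvar 2) (tadd (tvar 1) tone) (tmul (tvar 0) (tvar 6)))))))
     (fbetaf (tvar 1) (tvar 0) (tvar 3) (tvar 2)))))) (only parsing).

Definition expPhi : form := expF.

Lemma expPhi_sigma1 : isSigma1 expPhi.
Proof. unfold expPhi. simpl. tauto. Qed.

Lemma sat_expPhi : forall (env : nat -> M) x y z,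
  sat (scons z (scons y (scons x env))) expPhi <-> expG x y z.
Proof. intros. unfold expPhi. satsimp. reflexivity. Qed.

Lemma one_lt_modl10 : 1 < modl 1 0.
Proof. unfold modl. replace (1 + (0 + 1) * 1) with (1 + 1) by ring. apply lt_S, le_refl. Qed.

Lemma exp_total : forall x y, exists z, expG x y z.
Proof.
  intro x.
  match goal with |- forall z, @?P z =>
    apply (IND (fex expPhi) (scons x env0) P); [simpl; tauto | |  | ] end.
  - intro y. cbn [sat]. setoid_rewrite sat_expPhi. reflexivity.
  - exists 1, 1, 1. split; [apply beta_small, one_lt_modl10|]. split.
    + intros i _ Hi. exfalso. exact (not_lt_0 _ Hi).
    + apply beta_small, one_lt_modl10.
  - intros y [z [c [D [H0 [Hs Hy]]]]].
    destruct (extension c D y (z * x)) as [c' [D' [Tr Hn]]].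
    exists (z * x), c', D'. split; [apply Tr; auto using le_0_l|]. split; auto.
    intros i _ Hi. apply lt_S in Hi.
    destruct (classic (i = y)) as [->|Hne].
      * exists z. split; [eapply beta_le; apply Tr; eauto using le_refl|]. split; auto.
      * assert (Hlt : i < y) by (split; auto).
        destruct (Hs i Hi Hlt) as [v [_ [Hv1 Hv2]]]. exists v.
        assert (Hv1' : betaR c' D' i v) by (apply Tr; auto).
        split; [eapply beta_le; eauto|]. split; auto. apply Tr; auto.
        apply (proj1 (lt_iff i y)); auto.
Qed.

Lemma exp_unique : forall x y z z', expG x y z -> expG x y z' -> z = z'.
Proof.
  intros x y z z' [c [D [H0 [Hs Hy]]]] [c' [D' [H0' [Hs' Hy']]]].
  assert (G : forall i, i <= y -> forall v, v <= c -> forall v', v' <= c' ->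
              betaR c D i v -> betaR c' D' i v' -> v = v').
  { match goal with |- forall z, @?P z =>
      apply (IND (fimp (fle (tvar 0) (tvar 1)) (fball (tvar 2) (fball (tvar 5)
          (fimp (fbetaf (tvar 4) (tvar 5) (tvar 2) (tvar 1))
             (fimp (fbetaf (tvar 6) (tvar 7) (tvar 2) (tvar 0)) (feq (tvar 1) (tvar 0)))))))
         (scons y (scons c (scons D (scons c' (scons D' env0))))) P);
      [simpl; tauto | intro; satsimp; reflexivity | |] end.
    - intros _ v _ v' _ Hv Hv'. rewrite (beta_fun _ _ _ _ _ Hv H0), (beta_fun _ _ _ _ _ Hv' H0'). auto.
    - intros i IH Hi v _ v' _ Hv Hv'.
      assert (Hlt : i < y) by (apply lt_iff; auto).
      destruct (Hs i (lt_le _ _ Hlt) Hlt) as [w [Hw [Hw1 Hw2]]].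
      destruct (Hs' i (lt_le _ _ Hlt) Hlt) as [w' [Hw' [Hw1' Hw2']]].
      rewrite (IH (lt_le _ _ Hlt) w Hw w' Hw' Hw1 Hw1') in Hw2.
      rewrite (beta_fun _ _ _ _ _ Hv Hw2), (beta_fun _ _ _ _ _ Hv' Hw2'). reflexivity. }
  apply (G y (le_refl y)); auto; eapply beta_le; eauto.
Qed.

Lemma exp_succ : forall x y z, expG x (y + 1) z -> exists w, expG x y w /\ z = w * x.
Proof.
  intros x y z [c [D [H0 [Hs Hy]]]].
  assert (Hyy : y < y + 1) by (apply lt_S, le_refl).
  destruct (Hs y (lt_le _ _ Hyy) Hyy) as [v [_ [Hv1 Hv2]]].
  exists v. split.
  - exists c, D. split; auto. split; auto.
    intros i Hi Hlt. apply Hs; auto. eapply le_trans; [exact Hi|apply lt_le; auto].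
    eapply lt_trans; eauto.
  - eapply beta_fun; eauto.
Qed.

Lemma exp_zero : forall x, expG x 0 1.
Proof.
  intro x. exists 1, 1. split; [apply beta_small, one_lt_modl10|]. split.
  + intros i _ Hi. exfalso. exact (not_lt_0 _ Hi).
  + apply beta_small, one_lt_modl10.
Qed.

Definition Eexp (x y : M) : M := proj1_sig (constructive_indefinite_description _ (exp_total x y)).

Lemma Eexp_spec : forall x y, expG x y (Eexp x y).
Proof. intros x y. unfold Eexp. destruct (constructive_indefinite_description _ _). auto. Qed.

Lemma Eexp_definable : IsDefinableExp M Eexp.
Proof.
  split; [|split].
  - exists expPhi. split; [apply expPhi_sigma1|]. intros env x y z. rewrite sat_expPhi. split.
    + intro H. eapply exp_unique; [apply Eexp_spec|exact H].
    + intros <-. apply Eexp_spec.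
  - intro x. eapply exp_unique; [apply Eexp_spec|apply exp_zero].
  - intros x y. destruct (exp_succ x y _ (Eexp_spec x (y + 1))) as [w [Hw E]].
    rewrite E. f_equal. eapply exp_unique; [exact Hw|apply Eexp_spec].
Qed.

Fixpoint pw (u : M) (k : nat) : M := match k with O => 1 | S k' => pw u k' * u end.

Lemma pw_add : forall u k l, pw u (k + l) = pw u k * pw u l.
Proof. intros u k l. induction l as [|l IH]; simpl. rewrite Nat.add_0_r. ring.
  rewrite Nat.add_succ_r. simpl. rewrite IH. ring. Qed.

Lemma pw_mul : forall u v k, pw (u * v) k = pw u k * pw v k.
Proof. intros u v k. induction k as [|k IH]; simpl. ring. rewrite IH. ring. Qed.

Lemma pw_pw : forall u k l, pw (pw u k) l = pw u (k * l).
Proof. intros u k l. induction l as [|l IH]; simpl. rewrite Nat.mul_0_r. reflexivity.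
  rewrite IH, Nat.mul_succ_r, pw_add. reflexivity. Qed.

Lemma pw_le_base : forall u v k, u <= v -> pw u k <= pw v k.
Proof. intros u v k H. induction k; simpl. apply le_refl. apply le_mul_mono; auto. Qed.

Lemma pw_neq0 : forall u k, u <> 0 -> pw u k <> 0.
Proof. intros u k H. induction k; simpl. apply one_neq_0. intro E. apply mul_eq_0 in E. tauto. Qed.

Lemma pw_lt_base : forall u v k, u < v -> pw u (S k) < pw v (S k).
Proof.
  intros u v k H. simpl. assert (Hv : v <> 0).
  { intro E. subst. eapply not_lt_0; eauto. }
  eapply le_lt_trans; [apply le_mul_mono; [apply pw_le_base, lt_le; eauto| apply le_refl]|].
  rewrite !(mul_comm (pw v k)). apply lt_mul_mono; auto. apply pw_neq0; auto.
Qed.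

Lemma pw_ge1 : forall u k, 1 <= u -> 1 <= pw u k.
Proof. intros u k H. induction k; simpl. apply le_refl.
  rewrite <- (mul_1_l 1) at 1. apply le_mul_mono; auto. Qed.

Lemma pw_mono_exp : forall u k l, 1 <= u -> (k <= l)%nat -> pw u k <= pw u l.
Proof.
  intros u k l H Hkl. replace l with (k + (l - k))%nat by lia. rewrite pw_add.
  apply le_trans with (pw u k * 1); [rewrite mul_comm, mul_1_l; apply le_refl|].
  apply le_mul_mono; [apply le_refl | apply pw_ge1; auto].
Qed.

Lemma div_pw : forall u k, (1 <= k)%nat -> divides u (pw u k).
Proof. intros u k H. destruct k; [lia|]. simpl. apply div_mul_l, div_refl. Qed.

Lemma prime_div_pw : forall p u k, prime p -> divides p (pw u k) -> divides p u.
Proof.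
  intros p u k Hp. induction k; simpl; intro H.
  - exfalso. apply (proj2 (prime_neq p Hp)). apply div_one. auto.
  - destruct (euclid _ _ _ Hp H); auto.
Qed.

Lemma numeral_S : forall n, (numeral (S n) : M) = numeral n + 1.
Proof. reflexivity. Qed.

Lemma numeral_add : forall m n, (numeral (m + n) : M) = numeral m + numeral n.
Proof. intros m n. induction m; simpl plus. unfold numeral; simpl. ring.
  rewrite !numeral_S, IHm. ring. Qed.

Lemma numeral_mul : forall m n, (numeral (m * n) : M) = numeral m * numeral n.
Proof. intros m n. induction m; simpl mult. unfold numeral; simpl. ring.
  rewrite numeral_add, numeral_S, IHm. ring. Qed.

Lemma natmul_eq : forall n (u : M), natmul n u = numeral n * u.
Proof. intros n u. induction n; simpl. unfold numeral; simpl. ring.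
  rewrite IHn, numeral_S. ring. Qed.

Lemma numeral_le : forall m n, (m <= n)%nat -> (numeral m : M) <= numeral n.
Proof. intros m n H. replace n with (m + (n - m))%nat by lia. rewrite numeral_add. apply le_add_r. Qed.

Lemma numeral_lt_inv : forall m n, (numeral m : M) < numeral n -> (m < n)%nat.
Proof. intros m n H. destruct (Nat.lt_ge_cases m n); auto. exfalso.
  apply (lt_not_le _ _ H). apply numeral_le. auto. Qed.

Lemma lt_numeral : forall n (x : M), x < numeral n -> exists k, (k < n)%nat /\ x = numeral k.
Proof.
  induction n; intros x H.
  - exfalso. exact (not_lt_0 x H).
  - rewrite numeral_S in H. apply lt_S in H. destruct (classic (x = numeral n)) as [->|Hne].
    + exists n. split; auto.
    + destruct (IHn x (conj H Hne)) as [k [Hk ->]]. exists k. split; auto.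
Qed.

Lemma pw_numeral : forall m k, pw (numeral m) k = numeral (m ^ k).
Proof. intros m k. induction k. unfold numeral; simpl; ring. cbn [pw]. rewrite IHk, Nat.pow_succ_r', numeral_mul. apply mul_comm. Qed.

Lemma numeral_2 : (numeral 2 : M) = 1 + 1.
Proof. unfold numeral. simpl. ring. Qed.

Lemma Eexp_numeral : forall x k, Eexp x (numeral k) = pw x k.
Proof.
  intros x k. destruct Eexp_definable as [_ [H0 HS]]. induction k; simpl.
  - apply H0.
  - rewrite numeral_S, HS, IHk. reflexivity.
Qed.

Lemma le_mul_ge1 : forall v w, 1 <= w -> v <= v * w.
Proof. intros v w H. apply le_trans with (v * 1); [rewrite mul_comm, mul_1_l; apply le_refl|].
  apply le_mul_mono; auto using le_refl. Qed.

Lemma coprime_1_l : forall a : M, coprime 1 a.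
Proof. intros a d H _. apply div_one; auto. Qed.

Lemma abc_core (c S r : M) (m n : nat) : 1 <= c -> r <= S ->
  c * c * c < natmul m (r * r * (r * r)) -> pw S 16 <= pw c 9 -> numeral n <= c -> (n < m ^ 4)%nat.
Proof.
  intros Hc1 HrS Habc HS Hn.
  assert (H1 : pw c 3 < numeral m * pw S 4).
  { eapply lt_le_trans.
    - replace (pw c 3) with (c * c * c) by (simpl; ring). rewrite natmul_eq in Habc. exact Habc.
    - apply le_mul_mono; [apply le_refl|]. replace (r * r * (r * r)) with (pw r 4) by (simpl; ring).
      apply pw_le_base; auto. }
  apply (pw_lt_base _ _ 3) in H1.
  rewrite pw_pw, pw_mul, pw_pw, pw_numeral in H1. simpl (3 * 4)%nat in H1. simpl (4 * 4)%nat in H1.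
  assert (H2 : pw c 3 * pw c 9 < numeral (m ^ 4) * pw c 9).
  { rewrite <- pw_add. simpl (3 + 9)%nat. eapply lt_le_trans; [exact H1|].
    apply le_mul_mono; auto using le_refl. }
  apply lt_mul_cancel in H2.
  apply numeral_lt_inv. eapply le_lt_trans; [exact Hn|]. eapply le_lt_trans; [|exact H2].
  replace c with (pw c 1) at 1 by (simpl; ring). apply pw_mono_exp; auto.
Qed.

Section ExpSec.
Variable A : M -> Prop.
Variable e : M -> M -> M.
Hypothesis HE : ExpPrime M A e.

Lemma A_0 : A 0. Proof. apply HE. Qed.
Lemma A_1 : A 1. Proof. apply HE. Qed.
Lemma A_add : forall u v, A u -> A v -> A (u + v). Proof. apply HE. Qed.
Lemma A_pred : forall u, A u -> u <> 0 -> exists v, A v /\ u = v + 1.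
Proof. apply HE. Qed.
Lemma A_le : forall u v, A u -> A v -> u <= v -> exists z, A z /\ u + z = v.
Proof. intros u v Hu Hv H. destruct HE as [_ [HP _]]. apply HP; auto. Qed.
Lemma A_div : forall n, (0 < n)%nat -> forall u, A u -> exists q, A q /\ natmul n q <= u /\ u < natmul n (q + 1).
Proof. destruct HE as [_ [HP _]]. apply HP. Qed.

Lemma e_0 : forall x, e x 0 = 1.
Proof. intro x. destruct HE as [_ [_ [H1 _]]]. apply H1; auto using A_0. Qed.
Lemma e_1 : forall x, e x 1 = x. Proof. apply HE. Qed.
Lemma e_add : forall x u v, A u -> A v -> e x (u + v) = e x u * e x v. Proof. apply HE. Qed.
Lemma e_neq0 : forall x u, A u -> x <> 0 -> e x u <> 0. Proof. apply HE. Qed.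

Lemma A_numeral : forall k, A (numeral k).
Proof. induction k. apply A_0. rewrite numeral_S. apply A_add; auto using A_1. Qed.

Lemma A_natmul : forall n q, A q -> A (natmul n q).
Proof. intros n q Hq. induction n; simpl. apply A_0. apply A_add; auto. Qed.

Lemma e_numeral : forall x k, e x (numeral k) = pw x k.
Proof. intros x k. induction k. apply e_0. rewrite numeral_S, e_add, IHk, e_1; auto using A_numeral, A_1. Qed.

Lemma e_natmul : forall x n q, A q -> e x (natmul n q) = pw (e x q) n.
Proof. intros x n q Hq. induction n; simpl. apply e_0. rewrite e_add, IHn; auto using A_natmul. Qed.

Lemma side : forall N x u, (16 <= N)%nat -> A u -> 1 < x -> 1 < u ->
  exists P, P <> 0 /\ divides P (e x u) /\ (forall p, prime p -> divides p (e x u) -> divides p P) /\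
   pw P 2 <= e x u /\ ((exists k, u = numeral k) \/ (pw P 16 <= e x u /\ numeral (2 ^ N) <= e x u)).
Proof.
  intros N x u HN Hu Hx Hu1.
  assert (Hx2 : 1 + 1 <= x) by exact (proj1 (lt_iff 1 x) Hx).
  assert (Hx0 : x <> 0) by exact (proj1 (lt_1_neq x Hx)).
  assert (Hx1 : 1 <= x) by (apply le_neq0; auto).
  destruct (A_div N ltac:(lia) u Hu) as [q [Hq [H1 H2]]].
  destruct (A_le _ _ (A_natmul N q Hq) Hu H1) as [r [Hr Er]].
  assert (Hrn : r < numeral N).
  { rewrite <- Er, !natmul_eq in H2.
    apply (lt_add_cancel _ _ (numeral N * q)). rewrite !(add_comm _ (numeral N * q)).
    replace (numeral N * q + numeral N) with (numeral N * (q + 1)) by ring. exact H2. }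
  destruct (lt_numeral N r Hrn) as [k [Hk ->]].
  destruct (classic (q = 0)) as [->|Hq0].
  - assert (Eu : u = numeral k) by (rewrite <- Er, natmul_eq; ring).
    assert (Hk2 : (2 <= k)%nat).
    { destruct (Nat.lt_ge_cases k 2) as [H|H]; auto. exfalso.
      apply (lt_not_le _ _ Hu1). rewrite Eu. replace (1 : M) with (@numeral M 1) by (unfold numeral; simpl; ring).
      apply numeral_le. lia. }
    rewrite Eu, e_numeral. exists x. split; auto. split; [apply div_pw; lia|]. split.
    + intros p Hp H. eapply prime_div_pw; eauto.
    + split; [apply pw_mono_exp; auto|]. left. exists k. auto.
  - destruct (A_pred q Hq Hq0) as [q' [Hq' ->]].
    set (X := e x (q' + 1)).
    assert (EX : X = e x q' * x) by (unfold X; rewrite e_add, e_1; auto using A_1).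
    assert (HX0 : X <> 0) by (apply e_neq0; auto).
    assert (HxX : divides x X) by (rewrite EX; apply div_mul_l, div_refl).
    assert (HxleX : x <= X).
    { rewrite EX. rewrite mul_comm. apply le_mul_r. apply e_neq0; auto. }
    assert (HX1 : 1 <= X) by (eapply le_trans; eauto).
    assert (Eu : e x u = pw X N * pw x k).
    { rewrite <- Er, e_add, e_natmul; auto using A_natmul, A_numeral. rewrite e_numeral. reflexivity. }
    assert (HXN : pw X N <= e x u) by (rewrite Eu; apply le_mul_ge1, pw_ge1; auto).
    exists X. split; auto. split; [rewrite Eu; apply div_mul_r, div_pw; lia|]. split; [|split; [|right; split]].
    + intros p Hp H. rewrite Eu in H. destruct (euclid _ _ _ Hp H) as [H3|H3].
      * eapply prime_div_pw; eauto.
      * eapply div_trans; [|exact HxX]. eapply prime_div_pw; eauto.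
    + eapply le_trans; [|exact HXN]. apply pw_mono_exp; auto. lia.
    + eapply le_trans; [|exact HXN]. apply pw_mono_exp; auto.
    + eapply le_trans; [|exact HXN]. rewrite <- pw_numeral. apply pw_le_base.
      rewrite numeral_2. eapply le_trans; eauto.
Qed.

Lemma standard : forall K x y a b, ABC_4_3 M K -> A a -> A b -> 1 < x -> 1 < y -> 1 < a -> 1 < b ->
  e x a = e y b + 1 -> (exists ka, a = numeral ka) /\ (exists kb, b = numeral kb).
Proof.
  intros K x y a b Habc Ha Hb Hx Hy Ha1 Hb1 Heq.
  set (K3 := (K * K * K)%nat).
  set (N := (K3 ^ 4 + 16)%nat).
  assert (HN : (16 <= N)%nat) by (unfold N; lia).
  destruct (side N x a HN Ha Hx Ha1) as [Pa [Pa0 [Pac [Pap [Pa2 Pas]]]]].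
  destruct (side N y b HN Hb Hy Hb1) as [Pb [Pb0 [Pbc [Pbp [Pb2 Pbs]]]]].
  destruct Pas as [Sa|Ba]; destruct Pbs as [Sb|Bb]; try (split; assumption); exfalso.
  all: set (c := e x a) in *; set (b0 := e y b) in *.
  all: assert (Hb00 : b0 <> 0) by (apply e_neq0; auto; exact (proj1 (lt_1_neq y Hy))).
  all: assert (Hc0 : c <> 0) by (rewrite Heq; intro E; symmetry in E; exact (Q1 _ E)).
  all: assert (Hbc : b0 <= c) by (rewrite Heq; apply le_add_r).
  all: assert (Hc1 : 1 <= c) by (apply le_neq0; auto).
  all: destruct (rad_exists ((b0 * 1) * c)) as [r Hr];
    [intro E; apply mul_eq_0 in E as [E|E]; [apply mul_eq_0 in E as [E|E]; [auto|exact (one_neq_0 E)]|auto]|].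
  all: assert (HABC := Habc b0 1 c (proj2 (lt_0_neq _) Hb00) lt_0_1 (proj2 (lt_0_neq _) Hc0)
          (coprime_1 b0) (ltac:(rewrite Heq; apply coprime_S)) (coprime_1_l c) (eq_sym Heq) r Hr).
  all: assert (HrS : r <= Pa * Pb).
  all: try (destruct Hr as [_ [_ [_ Hmin]]]; apply Hmin;
      [apply lt_0_neq; intro E; apply mul_eq_0 in E; tauto
      | rewrite (mul_comm Pa Pb); apply div_mul_mono; [apply div_mul_r; auto|auto]
      | intros p Hp Hpn; destruct (euclid _ _ _ Hp Hpn) as [H|H];
        [destruct (euclid _ _ _ Hp H) as [H'|H'];
           [apply div_mul_l; auto| exfalso; apply (proj2 (prime_neq p Hp)); apply div_one; auto]
        | apply div_mul_r; auto]]).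
  all: assert (Hmain : pw (Pa * Pb) 16 <= pw c 9 /\ numeral (2 ^ N) <= c).
  all: try (assert (HPa8 : pw Pa 16 <= pw c 8) by
        (replace 16%nat with (2 * 8)%nat by reflexivity; rewrite <- pw_pw; apply pw_le_base; auto);
      assert (HPb8 : pw Pb 16 <= pw c 8) by
        (replace 16%nat with (2 * 8)%nat by reflexivity; rewrite <- pw_pw; apply pw_le_base;
         eapply le_trans; eauto);
      rewrite pw_mul; change (pw c 9) with (pw c 8 * c)).
  - split; [|eapply le_trans; [apply Bb|auto]]. apply le_mul_mono; [auto|eapply le_trans; [apply Bb|auto]].
  - destruct Hmain as [Hm1 Hm2].
    pose proof (abc_core c (Pa * Pb) r K3 (2 ^ N) Hc1 HrS HABC Hm1 Hm2) as Hlt.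
    pose proof (Nat.pow_gt_lin_r 2 N ltac:(lia)). unfold N in *. lia.
  - split; [|apply Ba]. rewrite mul_comm. apply le_mul_mono; [auto|apply Ba].
  - destruct Hmain as [Hm1 Hm2].
    pose proof (abc_core c (Pa * Pb) r K3 (2 ^ N) Hc1 HrS HABC Hm1 Hm2) as Hlt.
    pose proof (Nat.pow_gt_lin_r 2 N ltac:(lia)). unfold N in *. lia.
  - split; [|apply Ba]. rewrite mul_comm. apply le_mul_mono; [auto|apply Ba].
  - destruct Hmain as [Hm1 Hm2].
    pose proof (abc_core c (Pa * Pb) r K3 (2 ^ N) Hc1 HrS HABC Hm1 Hm2) as Hlt.
    pose proof (Nat.pow_gt_lin_r 2 N ltac:(lia)). unfold N in *. lia.
Qed.

End ExpSec.

End Arith.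

Theorem theorem5p2 :
  forall (K : nat) (B : LStruct),
    ISigma1 B -> ABC_4_3 B K -> CatalanExp B ->
    forall (A : B -> Prop) (e : B -> B -> B),
      ExpPrime B A e -> CatalanFor A e.
Proof.
  intros K B HI Habc Hcat A e HE x y a b Ha Hb Hx Hy Ha1 Hb1 Heq.
  destruct (standard B HI A e HE K x y a b Habc Ha Hb Hx Hy Ha1 Hb1 Heq) as [[ka ->] [kb ->]].
  apply (Hcat (Eexp B HI) (Eexp_definable B HI)); auto.
  rewrite !(Eexp_numeral B HI). erewrite !e_numeral in Heq; eauto.
Qed.
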